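(* Consider a single agent with $m$ actions and unknown utility vector $\mathbf{u}\in[0,1]^m$, interacting with a principal over $T$ rounds in the no-regret model (with a single signal), and let $\mathcal{P}=\{\mathbf{p}\in[0,2]^m:\langle\mathbf{1},\mathbf{p}\rangle=m\}$. Consider the principal algorithm: set $\mathbf{p}^1=\mathbf{1}$; for $t=1,\dots,T$, pay according to $\mathbf{p}^t$, observe the agent's action $a^t$, and set $\mathbf{p}^{t+1}=\Pi_{\mathcal{P}}[\mathbf{p}^t-\eta\mathbf{e}_{a^t}]$ with $\eta=\sqrt{m/T}$; finally output $-\frac1T\sum_{t=1}^T\mathbf{p}^t$. This algorithm $\varepsilon$-learns any single-agent game using $\mathcal{O}(m^3+C^2m^2)/\varepsilon^2$ rounds.
   Context: In each round $t$ the principal chooses a payment vector $\mathbf{p}^t\in\mathbb{R}_+^m$, the agent's utility that round is $\mathbf{u}+\mathbf{p}^t$, the agent plays an action $a^t\in[m]$ and the principal observes it. No-regret model: for every $t\le T$, $\max_{a}\sum_{\tau\le t}\big[(\mathbf{u}+\mathbf{p}^\tau)[a]-(\mathbf{u}+\mathbf{p}^\tau)[a^\tau]\big]\le C\sqrt{T}$, for a constant $C$ (at most polynomial in $m$). $\Pi_{\mathcal{P}}$ is Euclidean projection onto $\mathcal{P}$, $\mathbf{e}_a$ is the $a$-th unit vector. The principal $\varepsilon$-learns the game if its output $\tilde{\mathbf{u}}$ satisfies $|\mathbf{u}[a]+W-\tilde{\mathbf{u}}[a]|\le\varepsilon$ for all $a$ for some constant $W\in\mathbb{R}$. *)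

(* Defs.v *)
From HB Require Import structures.
From mathcomp Require Import all_boot all_order all_algebra.
From mathcomp Require Import reals.
Set Implicit Arguments. Unset Strict Implicit. Unset Printing Implicit Defensive.
Import Order.TTheory GRing.Theory Num.Theory.
Local Open Scope ring_scope.

Section Defs.
Variable R : realType.

Definition inP (m : nat) (p : 'I_m -> R) : Prop :=
  (forall i, 0 <= p i <= 2) /\ \sum_(i < m) p i = m%:R.

Definition sqdist (m : nat) (x y : 'I_m -> R) : R := \sum_(i < m) (x i - y i) ^+ 2.

Definition is_proj (m : nat) (S : ('I_m -> R) -> Prop) (x y : 'I_m -> R) : Prop :=
  S y /\ forall z, S z -> sqdist x y <= sqdist x z.

Definition unitv (m : nat) (a : 'I_m) : 'I_m -> R := fun i => (i == a)%:R.

Definition alg_payments (m T : nat) (a : nat -> 'I_m) (p : nat -> 'I_m -> R) : Prop :=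
  p 1%N = (fun _ => 1) /\
  forall t, (1 <= t <= T)%N ->
    is_proj (@inP m)
      (fun i => p t i - Num.sqrt (m%:R / T%:R) * unitv (a t) i) (p t.+1).

Definition no_regret (m T : nat) (u : 'I_m -> R) (C : R)
    (a : nat -> 'I_m) (p : nat -> 'I_m -> R) : Prop :=
  forall t, (t <= T)%N -> forall b : 'I_m,
    \sum_(1 <= tau < t.+1) ((u b + p tau b) - (u (a tau) + p tau (a tau)))
      <= C * Num.sqrt T%:R.

Definition alg_output (m T : nat) (p : nat -> 'I_m -> R) : 'I_m -> R :=
  fun i => - (T%:R^-1 * \sum_(1 <= t < T.+1) p t i).

Definition eps_learns (m : nat) (u ut : 'I_m -> R) (eps : R) : Prop :=
  exists W : R, forall b : 'I_m, `|u b + W - ut b| <= eps.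

End Defs.

(* Main.v *)
Require Import Defs.
From HB Require Import structures.
From mathcomp Require Import all_boot all_order all_algebra.
From mathcomp Require Import reals ring lra.
Import Order.TTheory GRing.Theory Num.Theory.
Local Open Scope ring_scope.
Set Implicit Arguments. Unset Strict Implicit.

Section H.
Variable R : realType.
Variable m : nat.

Lemma sum_unitv (f : 'I_m -> R) a : \sum_i f i * @unitv R m a i = f a.
Proof.
rewrite (bigD1 a) //= big1 => [|i /negbTE ne]; rewrite /unitv ?eqxx ?ne ?mulr1 ?mulr0 ?addr0 //.
Qed.

Lemma sq_expand (al be : 'I_m -> R) l :
  \sum_i (al i + l * be i)^+2 =
  \sum_i al i ^+2 + 2 * l * \sum_i al i * be i + l^+2 * \sum_i be i ^+ 2.
Proof. rewrite !mulr_sumr -!big_split /=; apply eq_bigr => i _; ring. Qed.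

Lemma proj_nonexp (x y q : 'I_m -> R) :
  inP q -> is_proj (@inP R m) x y -> sqdist y q <= sqdist x q.
Proof.
move=> [q02 qs] [[y02 ys] ymin].
set c := \sum_i (x i - y i) * (y i - q i).
set d := \sum_i (y i - q i) ^+ 2.
have d0 : 0 <= d by apply: sumr_ge0 => i _; apply: sqr_ge0.
have key : forall l, 0 <= l <= 1 -> 0 <= 2 * l * c + l ^+ 2 * d.
  move=> l /andP [l0 l1].
  have zin : inP (fun i => y i - l * (y i - q i)).
    split.
      move=> i; have /andP[? ?] := y02 i; have /andP[? ?] := q02 i.
      apply/andP; split; nra.
    rewrite sumrB -mulr_sumr sumrB ys qs; ring.
  have := ymin _ zin; rewrite /sqdist.
  have -> : \sum_i (x i - (y i - l * (y i - q i))) ^+ 2 =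
            \sum_i ((x i - y i) + l * (y i - q i)) ^+ 2.
    by apply: eq_bigr => i _; congr (_ ^+ 2); ring.
  rewrite sq_expand -/c -/d; lra.
have c0 : 0 <= c.
  rewrite leNgt; apply/negP => cneg.
  have dc : 0 < d - c by lra.
  set l := - c / (d - c).
  have l0 : 0 < l by rewrite /l divr_gt0 // oppr_gt0.
  have l1 : l <= 1 by rewrite /l ler_pdivrMr // mul1r; lra.
  have ld : l * d <= - c.
    rewrite /l mulrAC ler_pdivrMr //; nra.
  have := key l; rewrite l1 ltW //= => /(_ isT) h.
  have : 2 * l * c + l ^+ 2 * d = l * (2 * c + l * d) by ring.
  move=> e; rewrite e in h.
  have : 2 * c + l * d < 0 by lra.
  move=> neg; nra.
rewrite /sqdist.
have -> : \sum_i (x i - q i) ^+ 2 = \sum_i ((x i - y i) + 1 * (y i - q i)) ^+ 2.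
  by apply: eq_bigr => i _; congr (_ ^+ 2); ring.
rewrite sq_expand -/c -/d.
have : 0 <= \sum_i (x i - y i) ^+ 2 by apply: sumr_ge0 => i _; apply: sqr_ge0.
lra.
Qed.

Lemma ogd (T : nat) (a : nat -> 'I_m) (p : nat -> 'I_m -> R) (q : 'I_m -> R) :
  (0 < T)%N -> alg_payments T a p -> inP q -> sqdist (p 1%N) q <= m%:R ->
  Num.sqrt (m%:R / T%:R) * \sum_(1 <= t < T.+1) (p t (a t) - q (a t)) <= m%:R.
Proof.
move=> T0 [p1 pstep] qP D1.
set eta := Num.sqrt (m%:R / T%:R).
have Tpos : 0 < (T%:R : R) by rewrite ltr0n.
have eta2 : eta ^+ 2 = m%:R / T%:R by rewrite sqr_sqrtr // divr_ge0.
set D := fun t => sqdist (p t) q.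
have step : forall t, (1 <= t < T.+1)%N ->
    2 * eta * (p t (a t) - q (a t)) <= D t - D t.+1 + eta ^+ 2.
  move=> t /andP [t1 tT].
  have [_ hmin] := pstep t ltac:(by rewrite t1 -ltnS).
  have := proj_nonexp qP (pstep t ltac:(by rewrite t1 -ltnS)).
  rewrite /D /sqdist.
  have -> : \sum_i (p t i - eta * unitv R (a t) i - q i) ^+ 2 =
            \sum_i ((p t i - q i) + (- eta) * unitv R (a t) i) ^+ 2.
    by apply: eq_bigr => i _; congr (_ ^+ 2); ring.
  rewrite sq_expand sum_unitv.
  have -> : \sum_i unitv R (a t) i ^+ 2 = 1 :> R.
    rewrite -[RHS](_ : unitv R (a t) (a t) = 1 :> R); last by rewrite /unitv eqxx.
    by rewrite -sum_unitv; apply: eq_bigr => i _; rewrite expr2.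
  lra.
have := ler_sum_nat step.
rewrite -mulr_sumr [X in _ <= X -> _]big_split /= sumr_const_nat subSS subn0.
have -> : \sum_(1 <= i < T.+1) (D i - D i.+1) = D 1%N - D T.+1.
  rewrite -[LHS]opprK -sumrN.
  under eq_bigr => i _ do rewrite opprB.
  by rewrite telescope_sumr // opprB.
have DT : 0 <= D T.+1 by apply: sumr_ge0 => i _; apply: sqr_ge0.
have : eta ^+ 2 *+ T = m%:R.
  by rewrite eta2 -mulr_natr mulrAC -mulrA divff ?mulr1 // gt_eqF.
rewrite /D in DT *; lra.
Qed.

Lemma final_ineq (r s eta C eps S : R) :
  0 < r -> 0 < s -> 0 <= C -> 0 < eps -> eta * s = r ->
  eta * S <= r ^+ 2 ->
  2 * ((r^+2) ^+ 3 + C ^+ 2 * (r^+2) ^+ 2) / eps ^+ 2 <= s ^+ 2 ->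
  r ^+ 2 * (C * s + S) <= eps * s ^+ 2.
Proof.
move=> r0 s0 C0 e0 es hS hT.
have Sl : S <= r * s.
  have : r * S <= r ^+ 2 * s.
    have -> : r * S = s * (eta * S) by rewrite -es; ring.
    have -> : r ^+ 2 * s = s * r ^+ 2 by ring.
    by apply: ler_wpM2l => //; lra.
  move=> h; rewrite -(ler_pM2l r0); move: h; nra.
have e2 : 0 < eps ^+ 2 by rewrite exprn_gt0.
move: hT; rewrite ler_pdivrMr // => hT.
have sq : (r ^+ 2 * (C + r)) ^+ 2 <= (eps * s) ^+ 2.
  have : (C + r) ^+ 2 <= 2 * (C ^+ 2 + r ^+ 2).
    rewrite -subr_ge0.
    have -> : 2 * (C ^+ 2 + r ^+ 2) - (C + r) ^+ 2 = (C - r) ^+ 2 by ring.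
    exact: sqr_ge0.
  move=> h; apply: le_trans (_ : 2 * ((r^+2) ^+ 3 + C ^+ 2 * (r^+2) ^+ 2) <= _).
    rewrite exprMn.
    have r4 : 0 <= (r ^+ 2) ^+ 2 by apply: sqr_ge0.
    have := ler_wpM2l r4 h; move=> h2; apply: le_trans h2 _; rewrite le_eqVlt; apply/orP; left; apply/eqP; ring.
  have -> : (eps * s) ^+ 2 = s ^+ 2 * eps ^+ 2 by ring. exact: hT.
have : r ^+ 2 * (C + r) <= eps * s.
  have p1 : 0 <= r ^+ 2 * (C + r) by apply: mulr_ge0; [apply: sqr_ge0| lra].
  have p2 : 0 <= eps * s by apply: mulr_ge0; lra.
  move: sq p1 p2; nra.
move=> h.
have : r ^+ 2 * (C * s + S) <= r ^+ 2 * (C * s + r * s).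
  apply: ler_wpM2l; [apply: sqr_ge0 | lra].
move=> h2; apply: le_trans h2 _.
have : r ^+ 2 * (C * s + r * s) = (r ^+ 2 * (C + r)) * s by ring.
move=> ->; rewrite expr2 mulrA; apply: ler_wpM2r; lra.
Qed.
Lemma abs_aux (x y d md : R) : x - y <= d -> y + d - x <= md -> 0 <= d -> d <= md ->
  `|x - y| <= md.
Proof. move=> h1 h2 h3 h4; rewrite ler_norml; apply/andP; split; lra. Qed.
End H.

Unset Implicit Arguments.

Theorem theorem5p2 (R : realType) :
  exists K : R, 0 < K /\
  forall (m : nat) (u : 'I_m -> R) (C eps : R) (T : nat)
         (a : nat -> 'I_m) (p : nat -> 'I_m -> R),
    (0 < m)%N ->
    (forall i, 0 <= u i <= 1) ->
    0 <= C ->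
    0 < eps ->
    K * (m%:R ^+ 3 + C ^+ 2 * m%:R ^+ 2) / eps ^+ 2 <= T%:R ->
    @alg_payments R m T a p ->
    @no_regret R m T u C a p ->
    eps_learns u (@alg_output R m T p) eps.
Proof.
exists 2; split => //.
move=> m u C eps T a p m0 u01 C0 e0 hT alg nr.
have mpos : 0 < (m%:R : R) by rewrite ltr0n.
have e2 : 0 < eps ^+ 2 by rewrite exprn_gt0.
have T0 : (0 < T)%N.
  rewrite lt0n; apply/negP => /eqP T0; move: hT; rewrite T0 /=.
  apply/negP; rewrite -ltNge; apply: divr_gt0 => //.
  apply: mulr_gt0 => //; apply: ltr_wpDr; first by apply: mulr_ge0; apply: sqr_ge0.
  by rewrite exprn_gt0.
have Tpos : 0 < (T%:R : R) by rewrite ltr0n.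
set ubar := (\sum_i u i) / m%:R.
have su0 : 0 <= \sum_i u i by apply: sumr_ge0 => i _; have /andP[] := u01 i.
have su1 : \sum_i u i <= m%:R.
  rewrite -[m in X in _ <= X]card_ord -sumr_const; apply: ler_sum => i _.
  by have /andP[] := u01 i.
have ub0 : 0 <= ubar by apply: divr_ge0 => //; apply: ltW.
have ub1 : ubar <= 1 by rewrite /ubar ler_pdivrMr // mul1r.
have mub : m%:R * ubar = \sum_i u i by rewrite /ubar mulrC -mulrA mulVf ?mulr1 // gt_eqF.
set c := 1 + ubar.
set q := fun i => c - u i.
have qP : inP q.
  split.
    by move=> i; have /andP[? ?] := u01 i; rewrite /q /c; apply/andP; split; lra.
  rewrite /q sumrB sumr_const card_ord -mub /c -mulr_natl; ring.
have D1 : sqdist (p 1%N) q <= m%:R.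
  have [p1 _] := alg; rewrite /sqdist p1.
  rewrite -[m in X in _ <= X]card_ord -sumr_const; apply: ler_sum => i _.
  have /andP[? ?] := u01 i; rewrite /q /c; nra.
have hS := ogd T0 alg qP D1.
set S := \sum_(1 <= t < T.+1) (p t (a t) - q (a t)) in hS.
have pin : forall t, (1 <= t <= T)%N -> inP (p t).
  move=> [|t] // /andP [_ tT]; case: t tT => [|t] tT.
    have [-> _] := alg; split; first by move=> i; apply/andP; split; lra.
    by rewrite sumr_const card_ord.
  have [_ ps] := alg; have [] := ps t.+1 _; first by rewrite /= ltnW.
  by [].
set X := fun b => \sum_(1 <= t < T.+1) (u b + p t b).
set Sa := \sum_(1 <= t < T.+1) (u (a t) + p t (a t)).
have eS : S = Sa - T%:R * c.
  have -> : T%:R * c = \sum_(1 <= t < T.+1) c by rewrite sumr_const_nat subSS subn0 mulr_natl.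
  rewrite /S /Sa /q -sumrB; apply: eq_bigr => t _; ring.
have hX : forall b, X b - T%:R * c <= C * Num.sqrt T%:R + S.
  move=> b; have := nr T (leqnn T) b; rewrite sumrB -/Sa -/(X b) eS; lra.
have sX : \sum_b X b = T%:R * (m%:R * c).
  rewrite /X exchange_big /=.
  rewrite (eq_big_nat _ _ (F2 := fun _ => \sum_i u i + m%:R)).
    rewrite sumr_const_nat subSS subn0 -mub /c -[_ *+ T]mulr_natl; ring.
  move=> t tT; rewrite big_split /=; congr (_ + _).
  by have [_ ->] := pin t tT.
set Dd := C * Num.sqrt T%:R + S.
have sum2 : \sum_b (T%:R * c + Dd - X b) = m%:R * Dd.
  rewrite sumrB sX sumr_const card_ord -mulr_natl; ring.
have nn : forall b, 0 <= T%:R * c + Dd - X b.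
  move=> b; have := hX b; rewrite -/Dd; lra.
have low : forall b, T%:R * c + Dd - X b <= m%:R * Dd.
  move=> b; rewrite -sum2 (bigD1 b) //= lerDl; apply: sumr_ge0 => i _; exact: nn.
have Dd0 : 0 <= Dd.
  have : 0 <= m%:R * Dd by rewrite -sum2; apply: sumr_ge0 => i _; exact: nn.
  by rewrite pmulr_rge0.
have key : m%:R * Dd <= eps * T%:R.
  set r := Num.sqrt (m%:R : R); set s := Num.sqrt (T%:R : R).
  have r2 : r ^+ 2 = m%:R by rewrite sqr_sqrtr // ltW.
  have s2 : s ^+ 2 = T%:R by rewrite sqr_sqrtr // ltW.
  have r0 : 0 < r by rewrite sqrtr_gt0.
  have s0 : 0 < s by rewrite sqrtr_gt0.
  have es : Num.sqrt (m%:R / T%:R) * s = r.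
    rewrite /s -sqrtrM; last by apply: divr_ge0; apply: ltW.
    by rewrite mulrAC -mulrA divff ?mulr1 // gt_eqF.
  rewrite -r2 -s2 /Dd; apply: (final_ineq r0 s0 C0 e0 es).
    by rewrite r2.
  by rewrite r2 s2.
exists (- c) => b.
rewrite /alg_output.
have -> : u b + - c - - (T%:R^-1 * \sum_(1 <= t < T.+1) p t b) = (X b - T%:R * c) / T%:R.
  rewrite /X big_split /= sumr_const_nat subSS subn0 -mulr_natl.
  field; by rewrite gt_eqF.
rewrite normrM [`|T%:R^-1|]gtr0_norm ?invr_gt0 // ler_pdivrMr //.
apply: le_trans (_ : m%:R * Dd <= _) => //.
have hm : Dd <= m%:R * Dd by rewrite ler_peMl // ler1n.
exact: (abs_aux (hX b) (low b) Dd0 hm).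
Qed.
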